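(* Let $\mathbf A=(A,\wedge,\vee,\cdot,1,\sim,-,\neg)$ be a complete perfect DqRA. Define on $J^\infty(\mathbf A)$: $I_1=\{i\in J^\infty(\mathbf A)\mid i\leqslant 1\}$, $a\preccurlyeq b$ iff $b\leqslant a$, $c\in a\circ b$ iff $c\leqslant a\cdot b$, $a^\sim={\sim}\kappa(a)$, $a^-=-\kappa(a)$, $a^\neg=\neg\kappa(a)$. Then $a^\neg\in J^\infty(\mathbf A)$ for all $a\in J^\infty(\mathbf A)$, and $\mathbf A_+=(J^\infty(\mathbf A),I_1,\preccurlyeq,\circ,{}^\sim,{}^-,{}^\neg)$ is a DqRA-frame.
   Context: An InFL-algebra is $(A,\wedge,\vee,\cdot,1,\sim,-)$ with a lattice, a monoid, and $a\cdot b\leqslant c\iff a\leqslant -(b\cdot{\sim}c)\iff b\leqslant{\sim}(-c\cdot a)$; $a+b:=-({\sim}b\cdot{\sim}a)$. A quasi relation algebra is $(A,\wedge,\vee,\cdot,1,\sim,-,\neg)$ where the $\neg$-free reduct is an InFL-algebra, $\neg\neg a=a$, $\neg(a\wedge b)=\neg a\vee\neg b$, and $\neg(a\cdot b)=\neg a+\neg b$; DqRA means the lattice is distributive. Complete perfect: complete, and every element is the join of the completely join-irreducibles ($J^\infty(\mathbf A)$) below it and the meet of the completely meet-irreducibles above it. $\kappa(j)=\bigvee\{a\in A\mid j\not\leqslant a\}$. For a set $W$ and $\circ:W\times W\to\mathcal P(W)$, $U\circ V=\bigcup\{a\circ b\mid a\in U,b\in V\}$, $x\circ V=\{x\}\circ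 V$, $U\circ y=U\circ\{y\}$; superscripts compose left to right. A DInFL-frame is a tuple $(W,I,\preccurlyeq,\circ,{}^\sim,{}^-)$ with $I\subseteq W$, $\preccurlyeq$ a partial order, $\circ:W\times W\to\mathcal P(W)$, ${}^\sim,{}^-:W\to W$, such that for all $u,v,x,y,z$: (F1) $x\preccurlyeq y$ iff $y\in I\circ x$ iff $y\in x\circ I$; (F2) $x\preccurlyeq y$, $x\in I$ imply $y\in I$; (F3) $x\preccurlyeq y$, $x\in u\circ v$ imply $y\in u\circ v$; (F4) $(x\circ y)\circ z=x\circ(y\circ z)$; (F5) $z^\sim\in x\circ y$ iff $y^-\in z\circ x$; (F6) $x^{\sim-}\preccurlyeq x$ and $x^{-\sim}\preccurlyeq x$. A DqRA-frame additionally has ${}^\neg:W\to W$ with (F7) $x^{\neg\neg}=x$; (F8) $x\preccurlyeq y$ implies $y^\neg\preccurlyeq x^\neg$; (F9) $z^-\in x\circ y$ iff $z^\neg\in y^{\sim\neg}\circ x^{\sim\neg}$. *)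

(* Defs.v *)
From Stdlib Require Import ClassicalEpsilon.

Set Implicit Arguments.

(** Signature of a quasi relation algebra: (A, meet, join, mul, 1, ~, -, neg). *)
Record qra_ops (A : Type) := QraOps {
  meet : A -> A -> A;
  join : A -> A -> A;
  mul  : A -> A -> A;
  one  : A;
  tl   : A -> A;
  mn   : A -> A;
  ng   : A -> A
}.

Section Alg.
Variables (A : Type) (o : qra_ops A).

Definition le (x y : A) : Prop := meet o x y = x.

Definition is_lattice : Prop :=
  (forall x y z, meet o x (meet o y z) = meet o (meet o x y) z) /\
  (forall x y z, join o x (join o y z) = join o (join o x y) z) /\
  (forall x y, meet o x y = meet o y x) /\
  (forall x y, join o x y = join o y x) /\
  (forall x y, meet o x (join o x y) = x) /\
  (forall x y, join o x (meet o x y) = x).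

Definition is_distributive : Prop :=
  forall x y z, meet o x (join o y z) = join o (meet o x y) (meet o x z).

Definition is_monoid : Prop :=
  (forall x y z, mul o x (mul o y z) = mul o (mul o x y) z) /\
  (forall x, mul o (one o) x = x) /\ (forall x, mul o x (one o) = x).

Definition plus (a b : A) : A := mn o (mul o (tl o b) (tl o a)).

Definition is_InFL : Prop :=
  is_lattice /\ is_monoid /\
  forall a b c,
    (le (mul o a b) c <-> le a (mn o (mul o b (tl o c)))) /\
    (le (mul o a b) c <-> le b (tl o (mul o (mn o c) a))).

Definition is_qRA : Prop :=
  is_InFL /\
  (forall a, ng o (ng o a) = a) /\
  (forall a b, ng o (meet o a b) = join o (ng o a) (ng o b)) /\
  (forall a b, ng o (mul o a b) = plus (ng o a) (ng o b)).

Definition is_DqRA : Prop := is_qRA /\ is_distributive.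

Definition is_lub (S : A -> Prop) (s : A) : Prop :=
  (forall x, S x -> le x s) /\ (forall u, (forall x, S x -> le x u) -> le s u).
Definition is_glb (S : A -> Prop) (s : A) : Prop :=
  (forall x, S x -> le s x) /\ (forall u, (forall x, S x -> le u x) -> le u s).

Definition is_complete : Prop :=
  (forall S : A -> Prop, exists s, is_lub S s) /\
  (forall S : A -> Prop, exists s, is_glb S s).

Definition Jinf (j : A) : Prop := forall S, is_lub S j -> S j.
Definition Minf (m : A) : Prop := forall S, is_glb S m -> S m.

Definition is_perfect : Prop :=
  (forall a, is_lub (fun j => Jinf j /\ le j a) a) /\
  (forall a, is_glb (fun m => Minf m /\ le a m) a).

Definition complete_perfect_DqRA : Prop :=
  is_DqRA /\ is_complete /\ is_perfect.

(** kappa(j) = \/ {a | j not<= a} (well defined when the lattice is complete) *)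
Definition kappa (j : A) : A :=
  epsilon (inhabits j) (is_lub (fun a => ~ le j a)).

End Alg.

(** Frames.  Carrier: the elements of a type T satisfying W.
    circ x y z  means  z ∈ x ∘ y. *)
Section Frame.
Variables (T : Type) (W I : T -> Prop) (prec : T -> T -> Prop)
          (circ : T -> T -> T -> Prop) (ftl fmn fng : T -> T).

Definition DInFL_frame : Prop :=
  (forall x, I x -> W x) /\
  (forall x y z, W x -> W y -> circ x y z -> W z) /\
  (forall x, W x -> W (ftl x) /\ W (fmn x)) /\
  (forall x, W x -> prec x x) /\
  (forall x y, W x -> W y -> prec x y -> prec y x -> x = y) /\
  (forall x y z, W x -> W y -> W z -> prec x y -> prec y z -> prec x z) /\
  (* F1 *)
  (forall x y, W x -> W y ->
     (prec x y <-> exists i, I i /\ circ i x y) /\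
     (prec x y <-> exists i, I i /\ circ x i y)) /\
  (* F2 *)
  (forall x y, W x -> W y -> prec x y -> I x -> I y) /\
  (* F3 *)
  (forall u v x y, W u -> W v -> W x -> W y ->
     prec x y -> circ u v x -> circ u v y) /\
  (* F4 *)
  (forall x y z, W x -> W y -> W z -> forall w,
     (exists u, circ x y u /\ circ u z w) <-> (exists u, circ y z u /\ circ x u w)) /\
  (* F5 *)
  (forall x y z, W x -> W y -> W z ->
     (circ x y (ftl z) <-> circ z x (fmn y))) /\
  (* F6 *)
  (forall x, W x -> prec (fmn (ftl x)) x /\ prec (ftl (fmn x)) x).

Definition DqRA_frame : Prop :=
  DInFL_frame /\
  (forall x, W x -> W (fng x)) /\
  (* F7 *)
  (forall x, W x -> fng (fng x) = x) /\
  (* F8 *)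
  (forall x y, W x -> W y -> prec x y -> prec (fng y) (fng x)) /\
  (* F9 *)
  (forall x y z, W x -> W y -> W z ->
     (circ x y (fmn z) <-> circ (fng (ftl y)) (fng (ftl x)) (fng z))).
End Frame.

Section Plus.
Variables (A : Type) (o : qra_ops A).
Definition Jplus_I (i : A) : Prop := Jinf o i /\ le o i (one o).
Definition Jplus_prec (a b : A) : Prop := le o b a.
Definition Jplus_circ (a b c : A) : Prop := Jinf o c /\ le o c (mul o a b).
Definition Jplus_tl (a : A) : A := tl o (kappa o a).
Definition Jplus_mn (a : A) : A := mn o (kappa o a).
Definition Jplus_ng (a : A) : A := ng o (kappa o a).
End Plus.

(* Main.v *)
Require Import Defs.
From Stdlib Require Import Classical ClassicalEpsilon.
Set Implicit Arguments.

Lemma lat_facts (A : Type) (o : qra_ops A) : is_lattice o ->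
  (forall x, le o x x) /\
  (forall x y z, le o x y -> le o y z -> le o x z) /\
  (forall x y, le o x y -> le o y x -> x = y) /\
  (forall x y, le o (meet o x y) x) /\
  (forall x y, le o (meet o x y) y) /\
  (forall x y z, le o z x -> le o z y -> le o z (meet o x y)) /\
  (forall x y, le o x (join o x y)) /\
  (forall x y, le o y (join o x y)) /\
  (forall x y z, le o x z -> le o y z -> le o (join o x y) z).
Proof.
  intros [ma [ja [mc [jc [ab1 ab2]]]]]; unfold le.
  assert (mi : forall x, meet o x x = x).
  { intro x. rewrite <- (ab2 x x) at 2. apply ab1. }
  assert (lj : forall x y, meet o x y = x -> join o x y = y).
  { intros x y H. rewrite <- H, jc, mc. apply ab2. }
  assert (jl : forall x y, join o x y = y -> meet o x y = x).
  { intros x y H. rewrite <- H. apply ab1. }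
  split; [exact mi|].
  split; [intros x y z H1 H2; rewrite <- H1, <- ma, H2; reflexivity|].
  split; [intros x y H1 H2; rewrite <- H1, mc; exact H2|].
  split; [intros x y; rewrite mc, ma, mi; reflexivity|].
  split; [intros x y; rewrite <- ma, mi; reflexivity|].
  split; [intros x y z H1 H2; rewrite ma, H1, H2; reflexivity|].
  split; [intros x y; apply ab1|].
  split; [intros x y; rewrite jc; apply ab1|].
  intros x y z H1 H2. apply jl. apply lj in H1. apply lj in H2.
  rewrite <- ja, H2, H1. reflexivity.
Qed.

Theorem mainTheorem10 (A : Type) (o : qra_ops A) :
  complete_perfect_DqRA o ->
  (forall a, Jinf o a -> Jinf o (Jplus_ng o a)) /\
  DqRA_frame (Jinf o) (Jplus_I o) (Jplus_prec o) (Jplus_circ o)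
             (Jplus_tl o) (Jplus_mn o) (Jplus_ng o).
Proof.
  intros [[[[HL [[Mass [M1l M1r]] HR]] [Hnn [Hnm Hnmul]]] Hdist] [[Hcl Hcg] [Hpj Hpm]]].
  destruct (lat_facts HL) as [lr [lt [las [ml1 [ml2 [mglb [ju1 [ju2 jlub]]]]]]]].
  assert (ext : forall a b, (forall z, le o z a <-> le o z b) -> a = b).
  { intros a b H. apply las; [apply H|apply H]; apply lr. }
  assert (R1 : forall a b c, le o (mul o a b) c <-> le o a (mn o (mul o b (tl o c)))) by (intros; apply HR).
  assert (R2 : forall a b c, le o (mul o a b) c <-> le o b (tl o (mul o (mn o c) a))) by (intros; apply HR).
  assert (mntl : forall c, mn o (tl o c) = c).
  { intro c. apply ext. intro z. pose proof (R1 z (one o) c) as H.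
    rewrite M1r, M1l in H. symmetry; exact H. }
  assert (tlmn : forall c, tl o (mn o c) = c).
  { intro c. apply ext. intro z. pose proof (R2 (one o) z c) as H.
    rewrite M1r, M1l in H. symmetry; exact H. }
  assert (mulm_l : forall a a' b, le o a a' -> le o (mul o a b) (mul o a' b)).
  { intros a a' b H. apply R1. eapply lt; [exact H|]. apply R1, lr. }
  assert (mulm_r : forall a b b', le o b b' -> le o (mul o a b) (mul o a b')).
  { intros a b b' H. apply R2. eapply lt; [exact H|]. apply R2, lr. }
  assert (mn_anti : forall x y, le o x y -> le o (mn o y) (mn o x)).
  { intros x y H.
    assert (E : forall w, mn o w = mn o (mul o w (tl o (mn o (one o))))).
    { intro w. rewrite tlmn, M1r. reflexivity. }
    rewrite (E x). apply R1. eapply lt; [apply mulm_r; exact H|].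
    apply R1. rewrite <- E. apply lr. }
  assert (tl_anti : forall x y, le o x y -> le o (tl o y) (tl o x)).
  { intros x y H.
    assert (E : forall w, tl o w = tl o (mul o (mn o (tl o (one o))) w)).
    { intro w. rewrite mntl, M1l. reflexivity. }
    rewrite (E x). apply R2. eapply lt; [apply mulm_l; exact H|].
    apply R2. rewrite <- E. apply lr. }
  assert (ng_anti : forall x y, le o x y -> le o (ng o y) (ng o x)).
  { intros x y H. unfold le in H. rewrite <- H, Hnm. apply ju2. }

  assert (DItm : forall x y, le o x y <-> le o (tl o y) (tl o x)).
  { intros x y; split; [apply tl_anti|]. intro H. rewrite <- (mntl x), <- (mntl y). apply mn_anti, H. }
  assert (DImt : forall x y, le o x y <-> le o (mn o y) (mn o x)).
  { intros x y; split; [apply mn_anti|]. intro H. rewrite <- (tlmn x), <- (tlmn y). apply tl_anti, H. }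
  assert (DInn : forall x y, le o x y <-> le o (ng o y) (ng o x)).
  { intros x y; split; [apply ng_anti|]. intro H. rewrite <- (Hnn x), <- (Hnn y). apply ng_anti, H. }
  pose (DI := fun f g : A -> A => (forall x, g (f x) = x) /\ (forall x, f (g x) = x) /\
     (forall x y, le o x y <-> le o (f y) (f x)) /\ (forall x y, le o x y <-> le o (g y) (g x))).
  assert (DI_tm : DI (tl o) (mn o)) by (exact (conj mntl (conj tlmn (conj DItm DImt)))).
  assert (DI_mt : DI (mn o) (tl o)) by (exact (conj tlmn (conj mntl (conj DImt DItm)))).
  assert (DI_nn : DI (ng o) (ng o)) by (exact (conj Hnn (conj Hnn (conj DInn DInn)))).
  assert (swap1 : forall f g, DI f g -> forall k s, le o (f k) s <-> le o (g s) k).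
  { intros f g [gf [fg [Hf Hg]]] k s. split; intro H.
    - apply Hg in H. rewrite gf in H. exact H.
    - apply Hf in H. rewrite fg in H. exact H. }
  assert (swap2 : forall f g, DI f g -> forall k x, le o x (f k) <-> le o k (g x)).
  { intros f g [gf [fg [Hf Hg]]] k x. split; intro H.
    - apply Hg in H. rewrite gf in H. exact H.
    - apply Hf in H. rewrite fg in H. exact H. }
  assert (mprime : forall m x y, Minf o m -> le o (meet o x y) m -> le o x m \/ le o y m).
  { intros m x y Hm Hxy.
    assert (Hs : (fun w => w = join o x m \/ w = join o y m) m).
    { apply (Hm (fun w => w = join o x m \/ w = join o y m)). split.
      - intros w [Ew | Ew]; rewrite Ew; apply ju2.
      - intros u Hu. assert (Hux : le o u (join o x m)) by (apply Hu; auto).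
        assert (Huy : le o u (join o y m)) by (apply Hu; auto).
        unfold le in Hux. rewrite <- Hux, Hdist. apply jlub; [|apply ml2].
        assert (Huxy : le o (meet o u x) (join o y m)) by (eapply lt; [apply ml1|exact Huy]).
        unfold le in Huxy. rewrite <- Huxy, Hdist. apply jlub; [|apply ml2].
        eapply lt; [|exact Hxy]. apply mglb; [eapply lt; apply ml1 || apply ml2|apply ml2]. }
    destruct Hs as [E|E]; [left|right]; rewrite E; apply ju1. }
  pose (prime := fun j => forall S : A -> Prop,
     (forall u, (forall x, S x -> le o x u) -> le o j u) -> exists s, S s /\ le o j s).
  assert (Jprime : forall j, Jinf o j -> prime j).
  { intros j Hj S H.
    destruct (Hcl (fun w => exists s, S s /\ w = meet o j s)) as [t [Ht1 Ht2]].
    assert (Hjt : le o j t).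
    { apply (proj2 (Hpm t)). intros m [Hm Htm].
      destruct (classic (le o j m)) as [Hjm|Hjm]; [exact Hjm|].
      apply H. intros s Hs.
      assert (Hjs : le o (meet o j s) m).
      { eapply lt; [|exact Htm]. apply Ht1. exists s; auto. }
      destruct (mprime m j s Hm Hjs); [contradiction|assumption]. }
    assert (HT : (fun w => exists s, S s /\ w = meet o j s) j).
    { apply (Hj (fun w => exists s, S s /\ w = meet o j s)). split.
      - intros w [s [_ Ew]]. rewrite Ew. apply ml1.
      - intros u Hu. eapply lt; [exact Hjt|]. apply Ht2, Hu. }
    destruct HT as [s [Hs E]]. exists s. split; [exact Hs|]. unfold le. symmetry; exact E. }
  assert (primeJ : forall j, prime j -> Jinf o j).
  { intros j Hj S [H1 H2]. destruct (Hj S H2) as [s [Hs Hjs]].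
    assert (E : s = j) by (apply las; auto). rewrite <- E; exact Hs. }
  assert (Kspec : forall j, Jinf o j -> forall x, le o x (kappa o j) <-> ~ le o j x).
  { intros j Hj x.
    assert (Hk : is_lub o (fun a => ~ le o j a) (kappa o j)).
    { unfold kappa. apply epsilon_spec. apply Hcl. }
    split.
    - intros H1 H2. destruct (Jprime j Hj (fun a => ~ le o j a)) as [s [Hs1 Hs2]];
        [|contradiction].
      intros u Hu. eapply lt; [exact H2|]. eapply lt; [exact H1|]. apply Hk, Hu.
    - intro H. apply Hk, H. }
  assert (kuniq : forall j k, Jinf o j -> (forall x, le o x k <-> ~ le o j x) -> kappa o j = k).
  { intros j k Hj H. apply ext. intro z. rewrite Kspec by exact Hj. rewrite H. tauto. }
  assert (Jpres : forall f g, DI f g -> forall j, Jinf o j -> Jinf o (f (kappa o j))).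
  { intros f g Dfg j Hj. apply primeJ. intros S H.
    apply NNPP. intro Hno.
    assert (Hub : forall s, S s -> le o s (f j)).
    { intros s Hs. apply (swap2 f g Dfg). apply NNPP. intro Hn.
      apply (Kspec j Hj) in Hn. apply (swap1 f g Dfg) in Hn. apply Hno. exists s; auto. }
    pose proof (H _ Hub) as H1. apply (swap2 f g Dfg) in H1.
    destruct Dfg as [gf _]. rewrite gf in H1.
    apply (Kspec j Hj (kappa o j)); [apply lr|exact H1]. }
  assert (kappaf : forall f g, DI f g -> forall j, Jinf o j -> kappa o (f (kappa o j)) = f j).
  { intros f g Dfg j Hj. apply kuniq; [apply (Jpres f g Dfg j Hj)|].
    intro x. rewrite (swap2 f g Dfg), (swap1 f g Dfg), (Kspec j Hj).
    split; [tauto|]. intro H. apply NNPP. exact H. }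

  assert (tl1 : tl o (one o) = mn o (one o)).
  { apply ext. intro z. rewrite (swap2 _ _ DI_tm).
    pose proof (R1 (one o) z (mn o (one o))) as H. rewrite tlmn, M1r, M1l in H. tauto. }
  assert (Z1 : forall w x, le o w (tl o x) <-> le o (mul o x w) (tl o (one o))).
  { intros w x. rewrite (R2 x w (tl o (one o))), mntl, M1l. reflexivity. }
  assert (Z2 : forall a b, le o (mul o a b) (mn o (one o)) <-> le o a (mn o b)).
  { intros a b. rewrite (R1 a b (mn o (one o))), tlmn, M1r. reflexivity. }
  assert (tlmul : forall x y, tl o (mul o x y) = mn o (mul o (tl o (tl o x)) (tl o (tl o y)))).
  { intros x y. apply ext. intro z.
    rewrite <- (mntl x) at 1. rewrite <- (R2 y z (tl o x)).
    rewrite (Z1 (mul o y z) x).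
    rewrite <- (R1 z (tl o (tl o x)) (tl o y)).
    rewrite (Z1 (mul o z (tl o (tl o x))) y), (Mass y z (tl o (tl o x))), !tl1, (Z2 (mul o y z) (tl o (tl o x))), mntl.
    rewrite (Z1 (mul o y z) x), tl1. reflexivity. }
  assert (Jtl : forall a, Jinf o a -> Jinf o (tl o (kappa o a))) by exact (Jpres _ _ DI_tm).
  assert (Jmn : forall a, Jinf o a -> Jinf o (mn o (kappa o a))) by exact (Jpres _ _ DI_mt).
  assert (Jng : forall a, Jinf o a -> Jinf o (ng o (kappa o a))) by exact (Jpres _ _ DI_nn).
  split; [exact Jng|].
  unfold DqRA_frame, DInFL_frame, Jplus_I, Jplus_prec, Jplus_circ, Jplus_tl, Jplus_mn, Jplus_ng.
  split; [|split; [exact Jng|split; [|split]]].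
  - split; [intros x [H _]; exact H|].
    split; [intros x y z _ _ [H _]; exact H|].
    split; [intros x Hx; split; [apply Jtl|apply Jmn]; exact Hx|].
    split; [intros x _; apply lr|].
    split; [intros x y _ _ H1 H2; apply las; assumption|].
    split; [intros x y z _ _ _ H1 H2; eapply lt; eassumption|].
    split.
    {
      intros x y Hx Hy. split; split.
      - intro Hyx. destruct (Jprime y Hy (fun w => exists i, (Jinf o i /\ le o i (one o)) /\ w = mul o i x))
          as [s [[i [Hi Es]] Hys]].
        + intros u Hu. eapply lt; [exact Hyx|]. rewrite <- (M1l x). apply R1.
          apply (proj2 (Hpj (one o))). intros j Hj. apply R1. apply Hu. exists j; auto.
        + exists i. split; [exact Hi|]. split; [exact Hy|]. rewrite <- Es; exact Hys.
      - intros [i [[_ Hi] [_ H]]]. eapply lt; [exact H|]. rewrite <- (M1l x) at 2. apply mulm_l, Hi.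
      - intro Hyx. destruct (Jprime y Hy (fun w => exists i, (Jinf o i /\ le o i (one o)) /\ w = mul o x i))
          as [s [[i [Hi Es]] Hys]].
        + intros u Hu. eapply lt; [exact Hyx|]. rewrite <- (M1r x). apply R2.
          apply (proj2 (Hpj (one o))). intros j Hj. apply R2. apply Hu. exists j; auto.
        + exists i. split; [exact Hi|]. split; [exact Hy|]. rewrite <- Es; exact Hys.
      - intros [i [[_ Hi] [_ H]]]. eapply lt; [exact H|]. rewrite <- (M1r x) at 2. apply mulm_r, Hi. }
    split; [intros x y _ Hy Hyx [_ Hx1]; split; [exact Hy|eapply lt; eassumption]|].
    split; [intros u v x y _ _ _ Hy Hyx [_ Hx]; split; [exact Hy|eapply lt; eassumption]|].
    split.
    {
      intros x y z Hx Hy Hz w. split.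
      - intros [u [[Hu Hu1] [Hw Hw1]]].
        assert (Hw2 : le o w (mul o x (mul o y z))).
        { eapply lt; [exact Hw1|]. rewrite Mass. apply mulm_l, Hu1. }
        destruct (Jprime w Hw (fun s => exists u, (Jinf o u /\ le o u (mul o y z)) /\ s = mul o x u))
          as [s [[u' [Hu' Es]] Hws]].
        + intros t Ht. eapply lt; [exact Hw2|]. apply R2.
          apply (proj2 (Hpj (mul o y z))). intros j Hj. apply R2. apply Ht. exists j; auto.
        + exists u'. split; [exact Hu'|]. split; [exact Hw|]. rewrite <- Es; exact Hws.
      - intros [u [[Hu Hu1] [Hw Hw1]]].
        assert (Hw2 : le o w (mul o (mul o x y) z)).
        { eapply lt; [exact Hw1|]. rewrite <- Mass. apply mulm_r, Hu1. }
        destruct (Jprime w Hw (fun s => exists u, (Jinf o u /\ le o u (mul o x y)) /\ s = mul o u z))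
          as [s [[u' [Hu' Es]] Hws]].
        + intros t Ht. eapply lt; [exact Hw2|]. apply R1.
          apply (proj2 (Hpj (mul o x y))). intros j Hj. apply R1. apply Ht. exists j; auto.
        + exists u'. split; [exact Hu'|]. split; [exact Hw|]. rewrite <- Es; exact Hws. }
    split.
    {
      intros x y z Hx Hy Hz.
      assert (E : le o (tl o (kappa o z)) (mul o x y) <-> le o (mn o (kappa o y)) (mul o z x)).
      { rewrite (swap1 _ _ DI_tm), (Kspec z Hz), (swap1 _ _ DI_mt), (Kspec y Hy).
        rewrite <- (tlmn y) at 1. rewrite <- (R1 z x (mn o y)).
        rewrite <- (swap2 _ _ DI_tm). reflexivity. }
      pose proof (Jtl z Hz). pose proof (Jmn y Hy). tauto. }
    {
      intros x Hx. rewrite (kappaf _ _ DI_tm x Hx), (kappaf _ _ DI_mt x Hx), mntl, tlmn.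
      split; apply lr. }
  - intros x Hx. rewrite (kappaf _ _ DI_nn x Hx), Hnn. reflexivity.
  - intros x y Hx Hy Hyx. apply ng_anti. apply (Kspec x Hx). intro H.
    apply (Kspec y Hy (kappa o y)); [apply lr|]. eapply lt; eassumption.
  - intros x y z Hx Hy Hz.
    rewrite (kappaf _ _ DI_tm x Hx), (kappaf _ _ DI_tm y Hy).
    assert (E : le o (mn o (kappa o z)) (mul o x y) <->
                le o (ng o (kappa o z)) (mul o (ng o (tl o y)) (ng o (tl o x)))).
    { rewrite (swap1 _ _ DI_mt), (swap1 _ _ DI_nn), Hnmul. unfold plus. rewrite !Hnn, tlmul.
      reflexivity. }
    pose proof (Jmn z Hz). pose proof (Jng z Hz). tauto.
Qed.
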